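(* Let $J_1,\dots,J_7$ be pairwise anticommuting orthogonal complex structures on $\mathfrak a=\mathbb R^8$, let $\theta\in(0,\pi/2)$, $J'=J_7\cos\theta+J_6J_7\sin\theta$, and $V=\mathrm{Span}(J_1,\dots,J_5,J')$. Let $\langle\cdot,\cdot\rangle$ be an inner product on $V$ whose restriction to $\mathrm{Span}(J_1,\dots,J_5)$ is standard and for which $J'\perp J_i$, $i=1,\dots,5$. Then $(V,\langle\cdot,\cdot\rangle)$ is a WS-pair.
   Context: An inner product on $V\subset\mathfrak{so}(8)$ is standard if it is a positive multiple of $(J,K)\mapsto-\mathrm{Tr}(JK)$. For a Euclidean space $\mathfrak a$, a subspace $V\subset\mathfrak{so}(\mathfrak a)$ with inner product $\langle\cdot,\cdot\rangle$ defines the metric 2-step nilpotent Lie algebra $\mathfrak n=V\oplus\mathfrak a$ (orthogonal sum, $V$ central, $\langle J,[X,Y]\rangle=\langle JX,Y\rangle$). It is a WS-pair if the corresponding simply connected nilpotent Lie group with left-invariant metric is weakly symmetric. Standing fact: this holds iff for every $J\in V$, $X\in\mathfrak a$ there is $N\in\mathcal N(V)=\{N\in O(\mathfrak a): NVN^{-1}\subset V$, $K\mapsto NKN^{-1}$ orthogonal on $(V,\langle\cdot,\cdot\rangle)\}$ with $NX=-X$, $NJ=-JN$. *)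

(* Defs.v *)
From HB Require Import structures.
From mathcomp Require Import all_boot all_order all_algebra.
From mathcomp Require Import reals trigo.
Set Implicit Arguments. Unset Strict Implicit. Unset Printing Implicit Defensive.
Import Order.TTheory GRing.Theory Num.Theory.
Local Open Scope ring_scope.

(* a = R^8, vectors are column vectors, endomorphisms are 8x8 matrices;
   composition of operators is the matrix product *m. *)

Definition orth_cs {R : realType} (J : 'M[R]_8) : Prop :=
  J *m J^T = 1%:M /\ J *m J = - 1%:M.

(* J_1..J_7 are indexed by 'I_7 (J_k is J (inord (k-1))).
   J' = J_7 cos theta + J_6 J_7 sin theta. *)
Definition Jprime {R : realType} (J : 'I_7 -> 'M[R]_8) (theta : R) : 'M[R]_8 :=
  cos theta *: J (inord 6) + sin theta *: (J (inord 5) *m J (inord 6)).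

Definition inV5 {R : realType} (J : 'I_7 -> 'M[R]_8) (K : 'M[R]_8) : Prop :=
  exists a : 'I_5 -> R, K = \sum_(i < 5) a i *: J (inord i).

Definition inV {R : realType} (J : 'I_7 -> 'M[R]_8) (theta : R) (K : 'M[R]_8) : Prop :=
  exists (a : 'I_5 -> R) (b : R),
    K = \sum_(i < 5) a i *: J (inord i) + b *: Jprime J theta.

(* ip is an inner product on the subspace V (only its values on V matter). *)
Definition inner_product_on {R : realType} (V : 'M[R]_8 -> Prop)
    (ip : 'M[R]_8 -> 'M[R]_8 -> R) : Prop :=
  [/\ (forall K L, V K -> V L -> ip K L = ip L K),
      (forall (c : R) K L M, V K -> V L -> V M ->
          ip (c *: K + L) M = c * ip K M + ip L M)
    & (forall K, V K -> K != 0 -> 0 < ip K K)].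

(* The restriction of ip to W is standard: a positive multiple of -Tr(JK). *)
Definition standard_on {R : realType} (W : 'M[R]_8 -> Prop)
    (ip : 'M[R]_8 -> 'M[R]_8 -> R) : Prop :=
  exists c : R, 0 < c /\
    forall K L, W K -> W L -> ip K L = c * - \tr (K *m L).

(* N(V): orthogonal N normalizing V, with conjugation orthogonal on (V, ip).
   For N orthogonal, N^{-1} = N^T. *)
Definition in_NV {R : realType} (V : 'M[R]_8 -> Prop)
    (ip : 'M[R]_8 -> 'M[R]_8 -> R) (N : 'M[R]_8) : Prop :=
  [/\ N *m N^T = 1%:M,
      (forall K, V K -> V (N *m K *m N^T))
    & (forall K L, V K -> V L -> ip (N *m K *m N^T) (N *m L *m N^T) = ip K L)].

(* WS-pair, via the standing characterization of the paper. *)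
Definition WS_pair {R : realType} (V : 'M[R]_8 -> Prop)
    (ip : 'M[R]_8 -> 'M[R]_8 -> R) : Prop :=
  forall (J : 'M[R]_8) (X : 'cV[R]_8), V J ->
    exists N : 'M[R]_8, [/\ in_NV V ip N, N *m X = - X & N *m J = - (J *m N)].

(* Main.v *)
Require Import Defs.
From HB Require Import structures.
From mathcomp Require Import all_boot all_order all_algebra.
From mathcomp Require Import reals trigo.
From mathcomp Require Import ring lra.
Import Order.TTheory GRing.Theory Num.Theory.
Local Open Scope ring_scope.

Lemma trmx_sumI (R : realType) n (F : 'I_n -> 'M[R]_8) : (\sum_(i<n) F i)^T = \sum_(i<n) (F i)^T.
Proof. apply/matrixP => r c; rewrite !mxE !summxE; apply: eq_bigr => i _; by rewrite mxE. Qed.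
Lemma trmxZ (R : realType) (c : R) m n (A : 'M[R]_(m,n)) : (c *: A)^T = c *: A^T.
Proof. by apply/matrixP => i j; rewrite !mxE. Qed.
Lemma trmxD' (R : realType) m n (A B : 'M[R]_(m,n)) : (A + B)^T = A^T + B^T.
Proof. by apply/matrixP => i j; rewrite !mxE. Qed.
Lemma trmxN' (R : realType) m n (A : 'M[R]_(m,n)) : (- A)^T = - A^T.
Proof. by apply/matrixP => i j; rewrite !mxE. Qed.

Section Cliff.
Variable R : realType.
Variable J : 'I_7 -> 'M[R]_8.
Hypothesis hJ : forall i, J i *m (J i)^T = 1%:M /\ J i *m J i = - 1%:M.
Hypothesis hA : forall i j, i != j -> J i *m J j = - (J j *m J i).

Definition Jn (k : nat) : 'M[R]_8 := J (inord k).
Definition cl (a : 'I_5 -> R) : 'M[R]_8 := \sum_(i < 5) a i *: J (inord i).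
Definition dot (a b : 'I_5 -> R) : R := \sum_(i < 5) a i * b i.

Lemma JJ i : J i *m J i = - 1%:M. Proof. by case: (hJ i). Qed.
Lemma JT i : (J i)^T = - J i.
Proof.
case: (hJ i) => h1 h2.
have -> : (J i)^T = - (J i *m J i) *m (J i)^T by rewrite h2 opprK mul1mx.
by rewrite mulNmx -mulmxA h1 mulmx1.
Qed.

Lemma inord_neq (p q : nat) : (p < 7)%N -> (q < 7)%N -> p <> q ->
  (inord p : 'I_7) != inord q.
Proof.
move=> hp hq hpq; apply/eqP => /(congr1 val) /=.
by rewrite !inordK.
Qed.

Lemma JnA p q : (p < 7)%N -> (q < 7)%N -> p <> q -> Jn p *m Jn q = - (Jn q *m Jn p).
Proof. by move=> hp hq hpq; apply: hA; apply: inord_neq. Qed.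

Lemma JnJn p : Jn p *m Jn p = - 1%:M. Proof. exact: JJ. Qed.
Lemma JnT p : (Jn p)^T = - Jn p. Proof. exact: JT. Qed.

Lemma clT a : (cl a)^T = - cl a.
Proof.
rewrite /cl trmx_sumI -sumrN; apply: eq_bigr => i _.
by rewrite trmxZ JT scalerN.
Qed.

Lemma cl_mul a b : cl a *m cl b = \sum_(i < 5) \sum_(k < 5) (a i * b k) *: (Jn i *m Jn k).
Proof.
rewrite /cl mulmx_suml; apply: eq_bigr => i _.
rewrite mulmx_sumr; apply: eq_bigr => k _.
by rewrite -scalemxAl -scalemxAr scalerA.
Qed.

Lemma cl_anti a b : cl a *m cl b + cl b *m cl a = - (2 * dot a b)%:M.
Proof.
rewrite !cl_mul (exchange_big _ _ _ _ _ (fun i k => (b i * a k) *: (Jn i *m Jn k))).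
rewrite -big_split /= /dot.
have -> : \sum_(i<5) (\sum_(k<5) (a i * b k) *: (Jn i *m Jn k) + \sum_(k<5) (b k * a i) *: (Jn k *m Jn i))
   = \sum_(i<5) (- (2 * (a i * b i))%:M).
  apply: eq_bigr => i _.
  rewrite -big_split /= (bigD1 i) //= big1.
    rewrite addr0 (mulrC (b i)) -scalerDr JnJn.
    apply/matrixP => r c; rewrite !mxE; case: (_ == _); rewrite /= ?mulr1n ?mulr0n; ring.
  move=> k hk; rewrite (mulrC (b k)) -scalerDr JnA ?addNr ?scaler0 //;
    try by apply: leq_trans (ltn_ord _) _.
  by move=> /val_inj /eqP; rewrite eq_sym (negbTE hk).
rewrite sumrN; congr (- _); rewrite mulr_sumr.
apply/matrixP => r c; rewrite !mxE summxE; under eq_bigr do rewrite mxE.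
by rewrite sumrMnl.
Qed.

Ltac scal := apply/matrixP => r c; rewrite !mxE; case: (_ == _); rewrite /= ?mulr1n ?mulr0n; lra.

Lemma half (M N : 'M[R]_8) : M + M = N + N -> M = N.
Proof.
move=> h; apply/matrixP => r c; move/matrixP: h => /(_ r c); rewrite !mxE; lra.
Qed.

Lemma cl_sq a : cl a *m cl a = - (dot a a)%:M.
Proof.
apply: half; rewrite cl_anti.
apply/matrixP => r c; rewrite !mxE; case: (_ == _); rewrite /= ?mulr1n ?mulr0n; lra.
Qed.

Lemma cl_anti' a b : cl a *m cl b = - (cl b *m cl a) - (2 * dot a b)%:M.
Proof. by rewrite -cl_anti addrC addrK. Qed.

Lemma ltn57 (i : 'I_5) : (i < 7)%N. Proof. by apply: leq_trans (ltn_ord i) _. Qed.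

Lemma Jcl p a : (4 < p < 7)%N -> Jn p *m cl a = - (cl a *m Jn p).
Proof.
move=> /andP [h1 h2].
rewrite /cl mulmx_sumr mulmx_suml -sumrN; apply: eq_bigr => i _.
rewrite -scalemxAr -scalemxAl JnA ?scalerN // ?ltn57 //.
by move=> e; move: (ltn_ord i); rewrite -e ltnNge h1.
Qed.

Definition form (Y Z : 'cV[R]_8) : R := (Y^T *m Z) 0 0.

Lemma formE Y Z : form Y Z = \sum_i Y i 0 * Z i 0.
Proof. rewrite /form mxE; apply: eq_bigr => i _; by rewrite mxE. Qed.

Lemma formC Y Z : form Y Z = form Z Y.
Proof. rewrite !formE; apply: eq_bigr => i _; by rewrite mulrC. Qed.

Lemma formM (A : 'M[R]_8) Y Z : form (A *m Y) Z = form Y (A^T *m Z).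
Proof. by rewrite /form trmx_mul mulmxA. Qed.

Lemma formDr Y Z1 Z2 : form Y (Z1 + Z2) = form Y Z1 + form Y Z2.
Proof. by rewrite /form mulmxDr mxE. Qed.
Lemma formZr Y (c : R) Z : form Y (c *: Z) = c * form Y Z.
Proof. by rewrite /form -scalemxAr mxE. Qed.
Lemma formNr Y Z : form Y (- Z) = - form Y Z.
Proof. by rewrite /form mulmxN mxE. Qed.
Lemma form_sumr n Y (F : 'I_n -> 'cV[R]_8) : form Y (\sum_(i<n) F i) = \sum_(i<n) form Y (F i).
Proof. by rewrite /form mulmx_sumr summxE. Qed.

Lemma form_skew (S : 'M[R]_8) Y : S^T = - S -> form Y (S *m Y) = 0.
Proof.
move=> hS; have : form Y (S *m Y) = - form Y (S *m Y).
  by rewrite {1}formC formM hS mulNmx formNr.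
lra.
Qed.

Lemma cl_form a b X : form (cl a *m X) (cl b *m X) = dot a b * form X X.
Proof.
have h1 : form (cl a *m X) (cl b *m X) = - form X ((cl a *m cl b) *m X).
  by rewrite formM clT mulNmx -mulmxA formNr.
have h2 : form (cl a *m X) (cl b *m X) = - form X ((cl b *m cl a) *m X).
  by rewrite formC formM clT mulNmx -mulmxA formNr.
have h3 : form X ((cl a *m cl b + cl b *m cl a) *m X) = - (2 * dot a b) * form X X.
  rewrite cl_anti mulNmx mul_scalar_mx formNr formZr; ring.
move: h3; rewrite mulmxDl formDr; lra.
Qed.


Lemma JnTJn p : (Jn p)^T *m Jn p = 1%:M.
Proof. by rewrite JnT mulNmx JnJn opprK. Qed.

Lemma form_JJ p q X : (p < 7)%N -> (q < 7)%N ->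
  form (Jn p *m X) (Jn q *m X) = (p == q)%:R * form X X.
Proof.
move=> hp hq; rewrite formM mulmxA.
case: (eqVneq p q) => [->|hpq]; first by rewrite JnTJn mul1mx mul1r.
rewrite mul0r form_skew // trmx_mul trmxK !JnT !mulNmx opprK JnA //.
  by rewrite opprK. by move=> e; move: hpq; rewrite e eqxx.
Qed.

Lemma form_XJ p X : form X (Jn p *m X) = 0.
Proof. by apply: form_skew; rewrite JnT. Qed.

Lemma complete (X Y : 'cV[R]_8) : form X X != 0 ->
  form X X *: Y = form X Y *: X + \sum_(k < 7) form (Jn k *m X) Y *: (Jn k *m X).
Proof.
move=> hc; set c := form X X.
pose f (j : 'I_8) : 'cV[R]_8 := if j == ord0 then X else Jn j.-1 *m X.
pose U : 'M[R]_8 := \matrix_(i, j) f j i 0.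
have hpred : forall j : 'I_8, (j.-1 < 7)%N.
  by move=> j; have := ltn_ord j; case: (nat_of_ord j).
have hf : forall j l, form (f j) (f l) = c * (j == l)%:R.
  move=> j l; rewrite /f.
  case: (eqVneq j ord0) => [hj0|hj]; case: (eqVneq l ord0) => [hl0|hl]; rewrite ?hj0 ?hl0.
  - by rewrite eqxx mulr1.
  - by rewrite form_XJ eq_sym (negbTE hl) mulr0.
  - by rewrite formC form_XJ (negbTE hj) mulr0.
  - rewrite form_JJ // mulrC; congr (_ * _%:R) => //.
    congr (nat_of_bool _); apply/idP/idP => /eqP e; apply/eqP; last by rewrite e.
    apply: val_inj => /=.
    have hj' : (0 < j)%N by rewrite lt0n; apply: contra hj => /eqP h; apply/eqP/val_inj.
    have hl' : (0 < l)%N by rewrite lt0n; apply: contra hl => /eqP h; apply/eqP/val_inj.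
    by rewrite -(prednK hj') -(prednK hl') e.
have UtU : U^T *m U = c%:M.
  apply/matrixP => j l; rewrite [RHS]mxE -mulr_natr -hf formE mxE.
  apply: eq_bigr => i _; by rewrite !mxE.
have UUt : U *m U^T = c%:M.
  have h : (c^-1 *: U^T) *m U = 1%:M.
    by rewrite -scalemxAl UtU scale_scalar_mx mulVf.
  have := mulmx1C h; rewrite -scalemxAr => h2.
  have -> : U *m U^T = c *: (c^-1 *: (U *m U^T)) by rewrite scalerA divff // scale1r.
  by rewrite h2 scale_scalar_mx mulr1.
have key : c *: Y = \sum_(j < 8) form (f j) Y *: f j.
  rewrite -mul_scalar_mx -UUt -mulmxA.
  apply/matrixP => r z; rewrite (ord1 z) /U !mxE summxE; apply: eq_bigr => j _.
  rewrite !mxE mulrC; congr (_ * _).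
  rewrite formE; apply: eq_bigr => i _; by rewrite !mxE.
rewrite key big_ord_recl; congr (_ + _); apply: eq_bigr => k _.
Qed.


Lemma dotC a b : dot a b = dot b a.
Proof. by apply: eq_bigr => i _; rewrite mulrC. Qed.

Lemma exists_perp (u1 u2 u3 : 'I_5 -> R) :
  exists a : 'I_5 -> R, [/\ dot a a = 1, dot a u1 = 0, dot a u2 = 0 & dot a u3 = 0].
Proof.
pose M : 'M[R]_(5, 3) := \matrix_(i, j) (match val j with 0 => u1 i | 1 => u2 i | _ => u3 i end).
have hk : kermx M != 0.
  rewrite -mxrank_eq0 mxrank_ker.
  have := rank_leq_col M; case: (\rank M) => [|[|[|[|n]]]] //.
have [w hw wn0] := rowV0Pn hk.
move/sub_kermxP: hw => hw.
pose w' (i : 'I_5) := w 0 i.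
have hdot : forall j : 'I_3, \sum_(i<5) w' i * M i j = 0.
  move=> j; move/matrixP: hw => /(_ 0 j); by rewrite !mxE.
have hpos : 0 < dot w' w'.
  rewrite lt_def; apply/andP; split; last by apply: sumr_ge0 => i _; exact: sqr_ge0.
  apply: contra wn0 => /eqP h0; apply/eqP/matrixP => r i; rewrite (ord1 r) mxE.
  have := psumr_eq0P (fun i _ => sqr_ge0 (w' i)) h0 (isT : true) (i := i).
  by move/eqP; rewrite mulf_eq0 orbb => /eqP.
pose s := Num.sqrt (dot w' w').
have hs : 0 < s by rewrite sqrtr_gt0.
exists (fun i => w' i / s).
have hsc : forall u, dot (fun i => w' i / s) u = dot w' u / s.
  move=> u; rewrite /dot mulr_suml; apply: eq_bigr => i _; ring.
rewrite !hsc.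
have e0 := hdot (@Ordinal 3 0 isT); have e1 := hdot (@Ordinal 3 1 isT); have e2 := hdot (@Ordinal 3 2 isT).
split.
- rewrite dotC hsc -mulrA -expr2 /s exprVn sqr_sqrtr ?(ltW hpos) // mulfV //.
  exact: lt0r_neq0.
- rewrite /dot (eq_bigr (fun i => w' i * M i (@Ordinal 3 0 isT))) ?e0 ?mul0r //.
  by move=> i _; rewrite mxE.
- rewrite /dot (eq_bigr (fun i => w' i * M i (@Ordinal 3 1 isT))) ?e1 ?mul0r //.
  by move=> i _; rewrite mxE.
- rewrite /dot (eq_bigr (fun i => w' i * M i (@Ordinal 3 2 isT))) ?e2 ?mul0r //.
  by move=> i _; rewrite mxE.
Qed.


Lemma form_cl1 (A : 'M[R]_8) a (B W : 'cV[R]_8) :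
  form (A *m cl a *m B) W = dot a (fun i => form (A *m Jn i *m B) W).
Proof.
rewrite formC /cl mulmx_sumr mulmx_suml form_sumr /dot; apply: eq_bigr => i _.
by rewrite -scalemxAr -scalemxAl formZr formC.
Qed.

Lemma J5a_skew a : (Jn 5 *m cl a)^T = - (Jn 5 *m cl a).
Proof. by rewrite trmx_mul clT JnT mulmxN mulNmx opprK Jcl // opprK. Qed.

Lemma J5aa a : (Jn 5 *m cl a) *m (Jn 5 *m cl a) = cl a *m cl a.
Proof.
have hJa : cl a *m Jn 5 = - (Jn 5 *m cl a) by rewrite Jcl // opprK.
by rewrite mulmxA -(mulmxA (Jn 5)) hJa mulmxN mulNmx mulmxA JnJn mulNmx mul1mx mulNmx opprK.
Qed.

Lemma core (v : 'I_5 -> R) (X : 'cV[R]_8) : form X X != 0 ->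
  exists a b, dot a a = 1 /\ dot b b = 1 /\ dot a b = 0 /\ dot a v = 0 /\ dot b v = 0 /\
     Jn 5 *m cl a *m cl b *m X = - X.
Proof.
move=> hc; set c := form X X.
have [a [haa hav has hat]] := exists_perp v
   (fun i => form (Jn 5 *m Jn i *m X) (Jn 6 *m X))
   (fun i => form (Jn 5 *m Jn i *m X) (cl v *m X)).
set Z := Jn 5 *m cl a *m X.
have hcomp := @complete X Z hc.
have h0 : form X Z = 0 by rewrite /Z form_skew // J5a_skew.
have h6 : form (Jn 6 *m X) Z = 0 by rewrite formC /Z form_cl1.
have h5 : form (Jn 5 *m X) Z = 0.
  by rewrite /Z formM !mulmxA JnTJn mul1mx form_skew // clT.
pose b (i : 'I_5) := form (Jn i *m X) Z / c.
have hbZ : cl b *m X = Z.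
  apply: (scalerI hc).
  rewrite -/c hcomp h0 scale0r add0r big_ord_recr /= h6 scale0r addr0.
  rewrite big_ord_recr /= h5 scale0r addr0.
  rewrite /cl mulmx_suml scaler_sumr; apply: eq_bigr => i _.
  rewrite -scalemxAl scalerA /b mulrC divfK //.
have hZZ : (Jn 5 *m cl a) *m (Jn 5 *m cl a) = - 1%:M by rewrite J5aa cl_sq haa.
exists a, b; split; first exact: haa.
split.
  apply: (mulIf hc); rewrite mul1r -cl_form hbZ /Z formM J5a_skew mulmxA mulNmx.
  by rewrite hZZ opprK mul1mx.
split.
  apply: (mulIf hc); rewrite mul0r -cl_form hbZ /Z -mulmxA form_skew //; exact: JnT.
split; first exact: hav.
split.
  apply: (mulIf hc); rewrite mul0r -cl_form hbZ /Z form_cl1; exact: hat.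
by rewrite -mulmxA hbZ /Z mulmxA hZZ mulNmx mul1mx.
Qed.


Definition conjm (M Y : 'M[R]_8) := M *m Y *m M^T.
Definition refl (u k : 'I_5 -> R) := fun i => (-1) * k i + (2 * dot k u) * u i.
Definition negv (k : 'I_5 -> R) := fun i => (-1) * k i.

Lemma conjmM A B Y : conjm (A *m B) Y = conjm A (conjm B Y).
Proof. by rewrite /conjm trmx_mul !mulmxA. Qed.
Lemma conjmN M Y : conjm M (- Y) = - conjm M Y.
Proof. by rewrite /conjm mulmxN mulNmx. Qed.
Lemma conjmD M Y Z : conjm M (Y + Z) = conjm M Y + conjm M Z.
Proof. by rewrite /conjm mulmxDr mulmxDl. Qed.
Lemma conjmZ M (c : R) Y : conjm M (c *: Y) = c *: conjm M Y.
Proof. by rewrite /conjm -scalemxAr -scalemxAl. Qed.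

Lemma cl_lin p q x y : cl (fun i => p * x i + q * y i) = p *: cl x + q *: cl y.
Proof.
rewrite /cl !scaler_sumr -big_split; apply: eq_bigr => i _.
by rewrite scalerDl !scalerA.
Qed.

Lemma dot_lin p q x y z : dot (fun i => p * x i + q * y i) z = p * dot x z + q * dot y z.
Proof.
rewrite /dot !mulr_sumr -big_split; by apply: eq_bigr => i _ /=; rewrite mulrDl !mulrA.
Qed.

Lemma dot_linr p q x y z : dot z (fun i => p * x i + q * y i) = p * dot z x + q * dot z y.
Proof. by rewrite dotC dot_lin !(dotC z). Qed.

Lemma cl_refl u k : cl (refl u k) = - cl k + (2 * dot k u) *: cl u.
Proof. by rewrite /refl cl_lin scaleN1r. Qed.

Lemma cl_negv k : cl (negv k) = - cl k.
Proof.
rewrite /negv /cl -sumrN; apply: eq_bigr => i _; by rewrite -scalerA scaleN1r.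
Qed.

Lemma refl_dot u k l : dot u u = 1 -> dot (refl u k) (refl u l) = dot k l.
Proof.
move=> hu; rewrite /refl dot_lin !dot_linr (dotC u l) hu; ring.
Qed.

Lemma negv_dot k l : dot (negv k) (negv l) = dot k l.
Proof. by rewrite /dot; apply: eq_bigr => i _; rewrite /negv; ring. Qed.

Lemma clT' u : (cl u)^T = - cl u. Proof. exact: clT. Qed.

Lemma conj_u_cl u k : dot u u = 1 -> conjm (cl u) (cl k) = cl (refl u k).
Proof.
move=> hu; rewrite /conjm clT mulmxN cl_refl.
rewrite -mulmxA cl_anti' mulmxDr mulmxN mulmxA cl_sq hu mulmxN.
rewrite mulNmx mul1mx opprK mul_mx_scalar.
by rewrite opprB addrC.
Qed.

Lemma conj_u_J6 u : dot u u = 1 -> conjm (cl u) (Jn 6) = - Jn 6.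
Proof.
move=> hu; rewrite /conjm clT mulmxN -mulmxA Jcl // mulmxN mulmxA cl_sq hu.
by rewrite mulNmx mul1mx !opprK.
Qed.

Lemma conj_u_J56 u : dot u u = 1 -> conjm (cl u) (Jn 5 *m Jn 6) = Jn 5 *m Jn 6.
Proof.
move=> hu; rewrite /conjm clT mulmxN -!mulmxA (Jcl 6) // mulmxN (mulmxA (Jn 5)) (Jcl 5) //.
by rewrite mulNmx opprK !mulmxA cl_sq hu !mulNmx mul1mx opprK.
Qed.

Lemma conj_J5_cl k : conjm (Jn 5) (cl k) = cl (negv k).
Proof.
rewrite /conjm JnT mulmxN Jcl // mulNmx -mulmxA JnJn mulmxN mulmx1 opprK.
by rewrite cl_negv.
Qed.

Lemma conj_J5_J6 : conjm (Jn 5) (Jn 6) = - Jn 6.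
Proof.
by rewrite /conjm JnT mulmxN JnA // mulNmx -mulmxA JnJn mulmxN mulmx1 opprK.
Qed.

Lemma conj_J5_J56 : conjm (Jn 5) (Jn 5 *m Jn 6) = - (Jn 5 *m Jn 6).
Proof.
by rewrite /conjm JnT mulmxN mulmxA JnJn !mulNmx mul1mx opprK (JnA 5 6) // opprK.
Qed.


Lemma conj_u_1 u : dot u u = 1 -> conjm (cl u) 1%:M = 1%:M.
Proof. by move=> hu; rewrite /conjm mulmx1 clT mulmxN cl_sq hu opprK. Qed.

Lemma conj_J5_1 : conjm (Jn 5) 1%:M = 1%:M.
Proof. by rewrite /conjm mulmx1; case: (hJ (inord 5)). Qed.

Lemma form_pos X : X != 0 -> form X X != 0.
Proof.
move=> hX; apply: contra hX => /eqP h0; apply/eqP/matrixP => r z.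
rewrite (ord1 z) mxE; move: h0; rewrite formE => h0.
have := psumr_eq0P (fun i _ => sqr_ge0 (X i 0)) h0 (isT : true) (i := r).
by move/eqP; rewrite mulf_eq0 orbb => /eqP.
Qed.

Lemma tr_cl k l : \tr (cl k *m cl l) = - dot k l * 8%:R.
Proof.
have h := congr1 mxtrace (cl_anti k l).
rewrite mxtraceD raddfN /= mxtrace_scalar (mxtrace_mulC (cl l)) -mulr_natr in h.
lra.
Qed.

Lemma cl0 : cl (fun _ => 0) = 0.
Proof. by rewrite /cl big1 // => i _; rewrite scale0r. Qed.

Section Main.
Variable theta : R.
Variable ip : 'M[R]_8 -> 'M[R]_8 -> R.
Hypothesis hip : inner_product_on (inV J theta) ip.
Hypothesis hstd : standard_on (inV5 J) ip.
Hypothesis hperp : forall i : 'I_5, ip (Jprime J theta) (J (inord i)) = 0.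

Let Jp := Jprime J theta.

Lemma inV_cl k (c : R) : inV J theta (cl k + c *: Jp).
Proof. by exists k, c. Qed.

Lemma inV_cl0 k : inV J theta (cl k).
Proof. by exists k, 0; rewrite scale0r addr0. Qed.

Lemma inV_Jp : inV J theta Jp.
Proof. exists (fun _ => 0), 1; have := cl0; rewrite /cl => ->; by rewrite add0r scale1r. Qed.

Lemma ip_lin c {K L M} : inV J theta K -> inV J theta L -> inV J theta M ->
  ip (c *: K + L) M = c * ip K M + ip L M.
Proof. by case: hip => _ h _; apply: h. Qed.

Lemma ip_sym {K L} : inV J theta K -> inV J theta L -> ip K L = ip L K.
Proof. by case: hip => h _ _; apply: h. Qed.

Lemma inV0 : inV J theta 0.
Proof. exists (fun _ => 0), 0; have := cl0; rewrite /cl => ->; by rewrite scale0r addr0. Qed.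

Lemma ip0 M : inV J theta M -> ip 0 M = 0.
Proof.
move=> hM; have := ip_lin 1 inV0 inV0 hM; rewrite scale1r addr0 mul1r; lra.
Qed.

Lemma inV_add {K L} : inV J theta K -> inV J theta L -> inV J theta (K + L).
Proof.
move=> [k [c ->]] [l [d ->]]; exists (fun i => 1 * k i + 1 * l i), (c + d).
have := cl_lin 1 1 k l; rewrite !scale1r /cl => ->.
by rewrite scalerDl -!addrA; congr (_ + _); rewrite addrCA.
Qed.

Lemma inV_J (i : 'I_5) (c : R) : inV J theta (c *: J (inord i)).
Proof.
exists (fun j => if j == i then c else 0), 0; rewrite scale0r addr0.
rewrite (bigD1 i) //= eqxx big1 ?addr0 // => j hj; by rewrite (negbTE hj) scale0r.
Qed.

Lemma ip_cl_Jp k : ip (cl k) Jp = 0.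
Proof.
pose P (x : 'M[R]_8) := inV J theta x /\ ip x Jp = 0.
suff : P (cl k) by case.
apply: big_ind.
- by split; [exact: inV0 | exact: ip0 inV_Jp].
- move=> x y [hx ex] [hy ey]; split; first exact: inV_add.
  by have := ip_lin 1 hx hy inV_Jp; rewrite scale1r ex ey mul1r addr0.
- move=> i _; split; first exact: inV_J.
  have hJi : inV J theta (J (inord i)) by have := inV_J i 1; rewrite scale1r.
  have := ip_lin (k i) hJi inV0 inV_Jp; rewrite addr0 => ->.
  rewrite ip0; last exact: inV_Jp.
  by rewrite addr0 (ip_sym hJi inV_Jp) hperp mulr0.
Qed.

Lemma ip_formula k l (b g : R) :
  ip (cl k + b *: Jp) (cl l + g *: Jp) = ip (cl k) (cl l) + b * g * ip Jp Jp.
Proof.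
have hk := inV_cl0 k; have hl := inV_cl0 l; have hM := inV_cl l g.
have hJp := inV_Jp.
rewrite (addrC (cl k)) (ip_lin b hJp hk hM) (ip_sym hJp hM) (ip_sym hk hM).
rewrite (addrC (cl l)) (ip_lin g hJp hl hJp) (ip_lin g hJp hl hk).
rewrite ip_cl_Jp (ip_sym hJp hk) ip_cl_Jp (ip_sym hl hk); ring.
Qed.


Lemma WS_main : WS_pair (inV J theta) ip.
Proof.
move=> K X [k [beta ->]].
have [c0 [hc0 hs]] := hstd.
have ipcl : forall p q, ip (cl p) (cl q) = c0 * (dot p q * 8%:R).
  move=> p q; rewrite hs; [|by exists p|by exists q]; rewrite tr_cl; ring.
pose X' := if X == 0 then const_mx 1 else X.
have hX' : form X' X' != 0.
  apply: form_pos; rewrite /X'; case: (eqVneq X 0) => [_|hX] //.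
  apply/eqP => /matrixP /(_ 0 0); rewrite !mxE; apply/eqP; exact: oner_neq0.
have [a [b [haa [hbb [hab [hak [hbk hNX]]]]]]] := @core k X' hX'.
pose N := Jn 5 *m cl a *m cl b.
have conjN : forall l, conjm N (cl l) = cl (negv (refl a (refl b l))).
  by move=> l; rewrite /N !conjmM conj_u_cl // conj_u_cl // conj_J5_cl.
have conjJp : conjm N Jp = - Jp.
  rewrite /N /Jp /Jprime !conjmM !conjmD !conjmZ.
  rewrite !conj_u_J6 // !conjmN !conj_u_J6 // !conj_u_J56 //. rewrite conjmN.
  by rewrite conj_J5_J6 conj_J5_J56 opprK opprD !scalerN.
have NNt : N *m N^T = 1%:M.
  have : conjm N 1%:M = 1%:M by rewrite /N !conjmM !conj_u_1 // conj_J5_1.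
  by rewrite /conjm mulmx1.
have NtN : N^T *m N = 1%:M := mulmx1C NNt.
have conjK : forall l g, conjm N (cl l + g *: Jp) = cl (negv (refl a (refl b l))) + (- g) *: Jp.
  by move=> l g; rewrite conjmD conjmZ conjN conjJp scalerN scaleNr.
exists N; split.
- split => //.
  + move=> L [l [g ->]]; change (inV J theta (conjm N (cl l + g *: Jp))).
    by rewrite conjK; apply: inV_cl.
  + move=> L M [l [g ->]] [m [h ->]].
    change (ip (conjm N (cl l + g *: Jp)) (conjm N (cl m + h *: Jp)) =
            ip (cl l + g *: Jp) (cl m + h *: Jp)).
    rewrite !conjK !ip_formula !ipcl negv_dot !refl_dot //; ring.
- move: hNX; rewrite /X'; case: eqP => [-> _|_ h]; first by rewrite mulmx0 oppr0.
  exact: h.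
- have hc : conjm N (cl k + beta *: Jp) = - (cl k + beta *: Jp).
    rewrite conjK cl_negv !cl_refl.
    have e1 : dot k b = 0 by rewrite dotC.
    have e2 : dot (refl b k) a = 0.
      rewrite /refl dot_lin (dotC k a) hak e1; ring.
    by rewrite e1 e2 !mulr0 !scale0r !addr0 opprK scaleNr opprD.
  change (N *m (cl k + beta *: Jp) = - ((cl k + beta *: Jp) *m N)).
  by rewrite -[N *m _]mulmx1 -NtN mulmxA -/(conjm N _) hc mulNmx.
Qed.

End Main.

End Cliff.

Theorem mainTheorem5 (R : realType) (J : 'I_7 -> 'M[R]_8) (theta : R)
    (ip : 'M[R]_8 -> 'M[R]_8 -> R) :
  (forall i, orth_cs (J i)) ->
  (forall i j, i != j -> J i *m J j = - (J j *m J i)) ->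
  0 < theta < pi / 2 ->
  inner_product_on (inV J theta) ip ->
  standard_on (inV5 J) ip ->
  (forall i : 'I_5, ip (Jprime J theta) (J (inord i)) = 0) ->
  WS_pair (inV J theta) ip.
Proof.
move=> hJ hA _ hip hstd hperp.
have h1 := @WS_main R J hJ.
have h2 := h1 hA theta ip hip hstd hperp.
exact: h2.
Qed.
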